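(* Let $G=(V,E)$ be a graph with $n$ vertices, $m$ edges and $k(G)$ connected components, such that $h(G)$ is defined. Then for every integer $i$ with $i>n-k(G)-h(G)$, \[[x^i]T_G(x,1)=\binom{m-i-1}{n-k(G)-i}-\sum_{\substack{C\in \mathcal{C}(G),\\ |C|<h(G)}} \binom{m-|C|-i-1}{m-n+k(G)-1}.\]
   Context: $T_G(x,y)$ is the Tutte polynomial of $G$, i.e. $T_G(x,y)=\sum_{A\subseteq E}(x-1)^{r-rk(A)}(y-1)^{|A|-rk(A)}$ with $rk(A)=n-k(A)$, $k(A)$ the number of components of the spanning subgraph $(V,A)$, and $r=n-k(G)$. $[x^i]f(x)$ denotes the coefficient of $x^i$. $\mathcal{C}(G)$ is the set of (edge sets of) cycles of $G$, and $|C|$ is the length of the cycle. $h(G)$ is the minimum number of edges of a subgraph of $G$ of corank $2$ (i.e. an edge set $A$ with $|A|-rk(A)=2$, possibly disconnected) that contains no cut edges (no edge of $A$ is a bridge of $(V,A)$). *)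

(* Defs.v *)
(* Graphs are finite multigraphs (loops and parallel edges
   allowed): a finite vertex type V, a finite edge type E, and an endpoint map. *)
From mathcomp Require Import all_boot all_order all_algebra.
Set Implicit Arguments. Unset Strict Implicit. Unset Printing Implicit Defensive.
Import GRing.Theory Num.Theory.

Section Graph.
Variables (V E : finType) (ends : E -> V * V).

Definition adjA (A : {set E}) : rel V :=
  fun u v => [exists e in A, (ends e == (u, v)) || (ends e == (v, u))].

Definition ncomp (A : {set E}) : nat := n_comp (connect (adjA A)) V.

Definition rk (A : {set E}) : nat := #|V| - ncomp A.

Definition corank (A : {set E}) : nat := #|A| - rk A.

Definition is_bridge (A : {set E}) (e : E) : bool :=
  (e \in A) && (ncomp A < ncomp (A :\ e)).

(* degree of v in (V, C); a loop contributes 2 *)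
Definition deg (C : {set E}) (v : V) : nat :=
  \sum_(e in C) (((ends e).1 == v) + ((ends e).2 == v))%N.

Definition is_cycle (C : {set E}) : bool :=
  (C != set0) && [forall v, (deg C v == 0) || (deg C v == 2)] &&
  [forall u, forall v, ((0 < deg C u) && (0 < deg C v)) ==> connect (adjA C) u v].

(* A has corank 2 and no cut edges; h(G) is the minimum size of such A *)
Definition h_candidate (A : {set E}) : bool :=
  (corank A == 2) && [forall e in A, ~~ is_bridge A e].

Local Open Scope ring_scope.

(* Tutte polynomial T_G(x,y) as a polynomial in y with coefficients in Z[x] *)
Definition tutte : {poly {poly int}} :=
  \sum_(A : {set E})
     (('X - 1) ^+ (rk setT - rk A))%:P * ('X - 1) ^+ (#|A| - rk A)%N.

End Graph.

Local Open Scope ring_scope.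

(* integer binomial: C(a,b) = 0 unless 0 <= b <= a *)
Definition binz (a b : int) : int :=
  match a, b with
  | Posz a', Posz b' => ('C(a', b'))%:Z
  | _, _ => 0
  end.

Definition coefz (p : {poly int}) (i : int) : int :=
  match i with Posz j => p`_j | Negz _ => 0 end.

(* Main.v *)
Require Import Defs.
From mathcomp Require Import all_boot all_order all_algebra.
From mathcomp Require Import zify.
Import GRing.Theory Num.Theory.

Set Implicit Arguments. Unset Strict Implicit. Unset Printing Implicit Defensive.
Section G.
Variables (V E : finType) (ends : E -> V * V).
Local Notation adj := (adjA ends).

Lemma adj_sym A : symmetric (adj A).
Proof.
move=> u v; apply/existsP/existsP => -[e /andP[eA /orP[]H]]; exists e;
  by rewrite eA H ?orbT.
Qed.

Lemma csym A : connect_sym (adj A).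
Proof. exact/sym_connect_sym/adj_sym. Qed.

Definition croots A := [set x | roots (adj A) x].

Lemma ncompE A : ncomp ends A = #|croots A|.
Proof.
have H : connect (connect (adj A)) =2 connect (adj A).
  move=> x y; apply/idP/idP.
    by apply: connect_sub => u v.
  by apply: connect_sub => u v H; apply: connect1; apply: connect1.
rewrite /ncomp (eq_n_comp H).
rewrite /n_comp_mem; apply: eq_card => x; rewrite !inE andbT; reflexivity.
Qed.

Lemma adj_mono (A B : {set E}) : A \subset B -> subrel (adj A) (adj B).
Proof.
move=> sAB u v /existsP[e /andP[eA H]]; apply/existsP; exists e.
by rewrite (subsetP sAB _ eA).
Qed.

Lemma connect_mono (A B : {set E}) : A \subset B -> subrel (connect (adj A)) (connect (adj B)).
Proof.
move=> sAB; apply: connect_sub => u v H; apply: connect1; exact: adj_mono H.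
Qed.

Lemma ncomp_refine (A B : {set E}) :
  subrel (connect (adj A)) (connect (adj B)) -> (ncomp ends B <= ncomp ends A)%N.
Proof.
move=> sub; rewrite !ncompE.
have -> : croots B = fingraph.root (adj B) @: croots A.
  apply/setP => s; apply/idP/imsetP.
    rewrite inE => /eqP rs; exists (fingraph.root (adj A) s).
      by rewrite inE; apply: roots_root; apply: csym.
    rewrite -{1}rs; symmetry; apply/(fingraph.rootP (csym B)).
    by rewrite (csym B); apply: sub; apply: connect_root.
  by move=> [x _ ->]; rewrite inE; apply: roots_root; apply: csym.
exact: leq_imset_card.
Qed.

Lemma ncomp_refine_lt (A B : {set E}) x y :
  subrel (connect (adj A)) (connect (adj B)) ->
  connect (adj B) x y -> ~~ connect (adj A) x y ->
  (ncomp ends B < ncomp ends A)%N.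
Proof.
move=> sub cB ncA; rewrite !ncompE.
have -> : croots B = fingraph.root (adj B) @: croots A.
  apply/setP => s; apply/idP/imsetP.
    rewrite inE => /eqP rs; exists (fingraph.root (adj A) s).
      by rewrite inE; apply: roots_root; apply: csym.
    rewrite -{1}rs; symmetry; apply/(fingraph.rootP (csym B)).
    by rewrite (csym B); apply: sub; apply: connect_root.
  by move=> [x' _ ->]; rewrite inE; apply: roots_root; apply: csym.
set a := fingraph.root (adj A) x; set b := fingraph.root (adj A) y.
have aA : a \in croots A by rewrite inE; apply: roots_root; apply: csym.
have bA : b \in croots A by rewrite inE; apply: roots_root; apply: csym.
have ab : b != a.
  apply/eqP => eab; move/negP: ncA; apply; apply/(fingraph.rootP (csym A)).
  by rewrite -/a -/b eab.
have bA' : b \in croots A :\ a by rewrite !inE ab; rewrite inE in bA.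
have -> : fingraph.root (adj B) @: croots A = fingraph.root (adj B) @: (croots A :\ a).
  apply/setP => s; apply/imsetP/imsetP => -[z zA ->]; last first.
    by exists z => //; move: zA; rewrite !inE => /andP[].
  case: (eqVneq z a) => [za|zna]; last by exists z => //; rewrite !inE zna; rewrite inE in zA.
  exists b => //; rewrite za; apply/(fingraph.rootP (csym B)).
  apply: (connect_trans (y := x)).
    by rewrite (csym B); apply: sub; apply: connect_root.
  apply: (connect_trans cB); apply: sub; apply: connect_root.
apply: (leq_ltn_trans (leq_imset_card _ _)).
by rewrite (cardsD1 a (croots A)) aA.
Qed.


Local Notation deg := (deg ends).

Lemma deg_pos_of_adj (A : {set E}) x z : adj A x z -> (0 < deg A x)%N.
Proof.
case/existsP=> e /andP[eA H]; rewrite /Defs.deg (bigD1 e) //=.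
case/orP: H => /eqP ->; rewrite /= eqxx; lia.
Qed.

Lemma iso_connect (A : {set E}) x y : deg A x = 0%N -> connect (adj A) x y -> y = x.
Proof.
move=> d0 /connectP[[|z p] /= pth ->] //.
case/andP: pth => H _; have := deg_pos_of_adj H; by rewrite d0.
Qed.

Lemma adj_ends (A : {set E}) e : e \in A -> adj A (ends e).1 (ends e).2.
Proof. by move=> eA; apply/existsP; exists e; rewrite eA -surjective_pairing eqxx. Qed.

Lemma connect_del (A : {set E}) e : e \in A ->
  connect (adj (A :\ e)) (ends e).1 (ends e).2 ->
  subrel (connect (adj A)) (connect (adj (A :\ e))).
Proof.
move=> eA cuv; apply: connect_sub => u v /existsP[f /andP[fA H]].
case: (eqVneq f e) => [fe|fne].
  move: H; rewrite fe; case: (ends e) cuv => a b /= cab.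
  by case/orP => /eqP [<- <-] //; rewrite (csym (A :\ e)).
by apply: connect1; apply/existsP; exists f; rewrite !inE fne fA.
Qed.

Lemma ncomp_del_eq (A : {set E}) e : e \in A ->
  connect (adj (A :\ e)) (ends e).1 (ends e).2 -> ncomp ends (A :\ e) = ncomp ends A.
Proof.
move=> eA c; apply/eqP; rewrite eqn_leq; apply/andP; split.
  by apply: ncomp_refine; apply: connect_del.
by apply: ncomp_refine; apply: connect_mono; apply: subsetDl.
Qed.

Lemma bridge_of_nc (A : {set E}) e : e \in A ->
  ~~ connect (adj (A :\ e)) (ends e).1 (ends e).2 -> is_bridge ends A e.
Proof.
move=> eA nc; rewrite /is_bridge eA /=.
apply: (ncomp_refine_lt (x := (ends e).1) (y := (ends e).2)) => //.
  by apply: connect_mono; apply: subsetDl.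
by apply: connect1; apply: adj_ends.
Qed.

Lemma nonbridge_of_c (A : {set E}) e :
  connect (adj (A :\ e)) (ends e).1 (ends e).2 -> ~~ is_bridge ends A e.
Proof.
rewrite /is_bridge; case eA: (e \in A) => //= c.
by rewrite (ncomp_del_eq eA c) ltnn.
Qed.

Lemma claim_step (A : {set E}) e x y z :
  adj A y z ->
  [|| connect (adj (A :\ e)) x y, connect (adj (A :\ e)) x (ends e).1
    | connect (adj (A :\ e)) x (ends e).2] ->
  [|| connect (adj (A :\ e)) x z, connect (adj (A :\ e)) x (ends e).1
    | connect (adj (A :\ e)) x (ends e).2].
Proof.
move=> H P0.
case/orP: P0 => [c0|->]; last by rewrite orbT.
case/existsP: H => f /andP[fA H].
case: (eqVneq f e) => [fe|fne].
  move: H; rewrite fe; case: (ends e) => a b /=.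
  by case/orP => /eqP [ea eb]; subst; rewrite c0 ?orbT.
apply/orP; left; apply: (connect_trans c0); apply: connect1.
by apply/existsP; exists f; rewrite !inE fne fA.
Qed.


Lemma claim_path (A : {set E}) e x p y0 : path (adj A) y0 p ->
  [|| connect (adj (A :\ e)) x y0, connect (adj (A :\ e)) x (ends e).1
    | connect (adj (A :\ e)) x (ends e).2] ->
  [|| connect (adj (A :\ e)) x (last y0 p), connect (adj (A :\ e)) x (ends e).1
    | connect (adj (A :\ e)) x (ends e).2].
Proof.
elim: p y0 => [|z p IH] y0 //= /andP[H pth] P0.
by apply: IH pth _; apply: claim_step H P0.
Qed.

Lemma claimC (A : {set E}) e x y : connect (adj A) x y ->
  [|| connect (adj (A :\ e)) x y, connect (adj (A :\ e)) x (ends e).1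
    | connect (adj (A :\ e)) x (ends e).2].
Proof.
move=> /connectP[p pth ->]; apply: claim_path pth _.
by rewrite connect0.
Qed.

Lemma ncomp_del_le (A : {set E}) e : (ncomp ends (A :\ e) <= (ncomp ends A).+1)%N.
Proof.
rewrite !ncompE.
set B := A :\ e; set rv := fingraph.root (adj B) (ends e).2.
set ru := fingraph.root (adj B) (ends e).1.
rewrite (cardsD1 rv (croots B)).
have : (#|croots B :\ rv| <= #|croots A|)%N.
  rewrite -(@card_in_imset _ _ (fingraph.root (adj A))).
    apply: subset_leq_card; apply/subsetP => z /imsetP[x _ ->].
    by rewrite inE; apply: roots_root; apply: csym.
  have key : forall r1 r2, r1 \in croots B :\ rv -> r2 \in croots B :\ rv ->
     connect (adj A) r1 r2 -> r1 = r2 \/ r1 = ru.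
    move=> r1 r2; rewrite !inE => /andP[n1 /eqP r1r] /andP[n2 /eqP r2r] c.
    case/or3P: (claimC e c) => H.
    - left; by rewrite -r1r -r2r; apply/(fingraph.rootP (csym B)).
    - right; by rewrite -r1r; apply/(fingraph.rootP (csym B)).
    - by move/negP: n1; case; apply/eqP; rewrite -r1r; apply/(fingraph.rootP (csym B)).
  move=> r1 r2 i1 i2 /(fingraph.rootP (csym A)) c.
  have c' : connect (adj A) r2 r1 by rewrite (csym A).
  case: (key _ _ i1 i2 c) => // e1.
  by case: (key _ _ i2 i1 c') => // e2; rewrite e1 e2.
by case: (rv \in croots B) => /=; lia.
Qed.


Lemma ncomp_le (A : {set E}) : (ncomp ends A <= #|V|)%N.
Proof. by rewrite ncompE max_card. Qed.

Lemma ncomp_set0 : ncomp ends set0 = #|V|.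
Proof.
rewrite ncompE -cardsT; apply: eq_card => x; rewrite !inE.
apply/eqP; apply: (@iso_connect set0); last exact: connect_root.
by rewrite /Defs.deg big_set0.
Qed.

Lemma ncomp_mono (A B : {set E}) : A \subset B -> (ncomp ends B <= ncomp ends A)%N.
Proof. by move=> sAB; apply: ncomp_refine; apply: connect_mono. Qed.

Lemma rk_add (A B : {set E}) : A \subset B -> (rk ends B <= rk ends A + #|B :\: A|)%N.
Proof.
move=> sAB; move: {2}#|B :\: A| (erefl #|B :\: A|) => k.
elim: k B sAB => [|k IH] B sAB hk.
  have -> : B = A.
    apply/eqP; rewrite eqEsubset sAB andbT; apply/subsetP => x xB.
    apply/negPn/negP => xA; move/eqP: hk; rewrite cards_eq0 => /eqP hk.
    have : x \in B :\: A by rewrite inE xA xB.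
    by rewrite hk inE.
  by rewrite leq_addr.
have [x xBA] : exists x, x \in B :\: A.
  by apply/set0Pn; rewrite -card_gt0 hk.
have xB : x \in B by move: xBA; rewrite inE => /andP[].
have xA : x \notin A by move: xBA; rewrite inE => /andP[].
have sAB' : A \subset B :\ x.
  apply/subsetP => y yA; rewrite !inE (subsetP sAB _ yA) andbT.
  by apply/eqP => yx; move: xA; rewrite -yx yA.
have hk' : #|(B :\ x) :\: A| = k.
  have : #|B :\: A| = (x \in B :\: A) + #|(B :\: A) :\ x| by apply: cardsD1.
  rewrite xBA hk => /eqP; rewrite eqSS => /eqP ->.
  by apply: eq_card => y; rewrite !inE; case: (y == x); case: (y \in A).
have := IH _ sAB' hk'.
have := ncomp_del_le B x.
have := ncomp_le B; have := ncomp_le (B :\ x).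
rewrite /rk; lia.
Qed.

Lemma rk_set0 : rk ends set0 = 0%N.
Proof. by rewrite /rk ncomp_set0 subnn. Qed.

Lemma rk_le_card (A : {set E}) : (rk ends A <= #|A|)%N.
Proof.
have := rk_add (sub0set A); rewrite rk_set0 add0n.
by have -> : A :\: set0 = A by apply/setP => x; rewrite !inE.
Qed.

Lemma rk_mono (A B : {set E}) : A \subset B -> (rk ends A <= rk ends B)%N.
Proof. move=> sAB; have := ncomp_mono sAB; rewrite /rk; lia. Qed.

Lemma corank_mono (A B : {set E}) : A \subset B -> (corank ends A <= corank ends B)%N.
Proof.
move=> sAB; have := rk_add sAB.
have : #|B| = (#|A| + #|B :\: A|)%N.
  by rewrite -(cardsID A B) (setIidPr sAB).
rewrite /corank; lia.
Qed.

Lemma card_del (A : {set E}) e : e \in A -> #|A| = (#|A :\ e|).+1.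
Proof. by move=> eA; rewrite (cardsD1 e A) eA. Qed.

Lemma corank_bridge (A : {set E}) e : is_bridge ends A e ->
  (corank ends A <= corank ends (A :\ e))%N.
Proof.
case/andP=> eA lt; have := card_del eA; have := ncomp_le (A :\ e).
rewrite /corank /rk; lia.
Qed.

Lemma corank_nonbridge (A : {set E}) e : e \in A -> ~~ is_bridge ends A e ->
  corank ends A = (corank ends (A :\ e)).+1.
Proof.
move=> eA; rewrite /is_bridge eA /= -leqNgt => le.
have := ncomp_mono (subsetDl A [set e]).
have := card_del eA; have := rk_le_card (A :\ e).
rewrite /corank /rk; lia.
Qed.


Lemma peel (A : {set E}) : exists2 B : {set E}, B \subset A &
  (corank ends A <= corank ends B)%N /\ (forall e, e \in B -> ~~ is_bridge ends B e).
Proof.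
move: {2}#|A| (leqnn #|A|) => n; elim: n A => [|n IH] A hA.
  exists A => //; split=> // e eA; by move: hA; rewrite (card_del eA).
case: (boolP [exists e in A, is_bridge ends A e]) => [/existsP[e /andP[eA br]]|nb].
  have : (#|A :\ e| <= n)%N by move: hA; rewrite (card_del eA).
  case/IH => B sB [c1 c2]; exists B; first by apply: subset_trans sB (subsetDl _ _).
  split; [exact: leq_trans (corank_bridge br) c1 | exact: c2].
exists A => //; split=> // e eA; apply/negP => br; move/negP: nb; apply.
by apply/existsP; exists e; rewrite eA br.
Qed.

Lemma find_cand (A : {set E}) : (2 <= corank ends A)%N ->
  exists2 B : {set E}, B \subset A & h_candidate ends B.
Proof.
move: {2}#|A| (leqnn #|A|) => n; elim: n A => [|n IH] A hA c2.
  by move: c2; rewrite /corank; lia.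
have [B sB [cB nbB]] := peel A.
case: (eqVneq (corank ends B) 2) => [e2|ne2].
  exists B => //; rewrite /h_candidate e2 eqxx /=.
  by apply/forallP => e; apply/implyP; exact: nbB.
have c3 : (3 <= corank ends B)%N by lia.
have [e eB] : exists e, e \in B.
  apply/set0Pn; rewrite -card_gt0; move: c3; rewrite /corank; lia.
have ceq := corank_nonbridge eB (nbB e eB).
have hB : (#|B| <= #|A|)%N by apply: subset_leq_card.
have hB' : (#|B :\ e| <= n)%N by move: hB; rewrite (card_del eB); lia.
have [C sC cand] := IH _ hB' (ltac:(lia)).
exists C => //; apply: subset_trans sC _; apply: subset_trans sB.
exact: subsetDl.
Qed.

Lemma small_corank (h : nat) (A : {set E}) :
  (forall B : {set E}, h_candidate ends B -> (h <= #|B|)%N) ->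
  (#|A| < h)%N -> (corank ends A <= 1)%N.
Proof.
move=> hmin hA; rewrite leqNgt; apply/negP => c2.
have [B sB cand] := find_cand c2.
have := hmin _ cand; have := subset_leq_card sB; lia.
Qed.

Lemma sum_eqK (K : {set V}) a : (\sum_(x in K) (a == x : nat))%N = (a \in K).
Proof.
case: (boolP (a \in K)) => aK.
  rewrite (bigD1 a) //= eqxx big1 // => x /andP[_ xa].
  by rewrite eq_sym (negbTE xa).
by rewrite big1 // => x xK; case: eqP => // ax; move: aK; rewrite ax xK.
Qed.

Lemma sum_deg_K (B : {set E}) (K : {set V}) :
  (\sum_(x in K) deg B x)%N =
  (\sum_(e in B) (((ends e).1 \in K) + ((ends e).2 \in K)))%N.
Proof.
rewrite /Defs.deg exchange_big /=; apply: eq_bigr => e _.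
by rewrite big_split /= !sum_eqK.
Qed.

Lemma handshake (B : {set E}) : (\sum_x deg B x)%N = (#|B| * 2)%N.
Proof.
have -> : (\sum_x deg B x)%N = (\sum_(x in [set: V]) deg B x)%N.
  by apply: eq_bigl => x; rewrite inE.
rewrite sum_deg_K -sum_nat_const; apply: eq_bigr => e _; by rewrite !inE.
Qed.

Lemma deg_del (C : {set E}) f x : f \in C ->
  deg C x = (deg (C :\ f) x + (((ends f).1 == x) + ((ends f).2 == x)))%N.
Proof.
move=> fC; rewrite /Defs.deg (bigD1 f) //= addnC; congr (_ + _).
by apply: eq_bigl => e; rewrite !inE andbC.
Qed.

Lemma cycle_even (C : {set E}) x : is_cycle ends C -> (2 %| deg C x)%N.
Proof.
case/andP=> /andP[_ /forallP /(_ x) /orP[] /eqP ->] _ //.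
Qed.

Lemma cycle_nonempty (C : {set E}) : is_cycle ends C -> C != set0.
Proof. by case/andP=> /andP[]. Qed.

Lemma cycle_conn (C : {set E}) f : is_cycle ends C -> f \in C ->
  connect (adj (C :\ f)) (ends f).1 (ends f).2.
Proof.
move=> cyc fC; apply/negPn/negP => nc.
set D := C :\ f; set u := (ends f).1; set v := (ends f).2.
set K := [set x | connect (adj D) u x].
have S1 : (2 %| \sum_(x in K) deg C x)%N.
  by apply: dvdn_sum => x _; apply: cycle_even.
have S2 : (\sum_(x in K) deg C x = \sum_(x in K) deg D x + ((u \in K) + (v \in K)))%N.
  rewrite -!sum_eqK -!big_split /=; apply: eq_bigr => x _.
  by rewrite (deg_del x fC) addnA.
have S3 : (2 %| \sum_(x in K) deg D x)%N.
  rewrite sum_deg_K; apply: dvdn_sum => e eD.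
  have a := adj_ends eD.
  have -> : ((ends e).2 \in K) = ((ends e).1 \in K).
    rewrite !inE; apply/idP/idP => H.
      by apply: (connect_trans H); rewrite (csym D); apply: connect1.
    by apply: (connect_trans H); apply: connect1.
  by rewrite addnn -mul2n dvdn_mulr.
have uK : u \in K by rewrite inE connect0.
have vK : v \notin K by rewrite inE.
move: S1 S3; rewrite S2 uK (negbTE vK) /=.
move: (\sum_(x in K) deg D x)%N => s; lia.
Qed.

Lemma cycle_nonbridge (C D : {set E}) f : is_cycle ends C -> C \subset D -> f \in C ->
  ~~ is_bridge ends D f.
Proof.
move=> cyc sCD fC; apply: nonbridge_of_c.
apply: (connect_mono _ (cycle_conn cyc fC)).
by apply: setSD.
Qed.

Lemma cycle_corank (C D : {set E}) : is_cycle ends C -> C \subset D ->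
  (1 <= corank ends D)%N.
Proof.
move=> cyc sCD; have /set0Pn [f fC] := cycle_nonempty cyc.
by rewrite (corank_nonbridge (subsetP sCD _ fC) (cycle_nonbridge cyc sCD fC)).
Qed.

Lemma two_cycles_aux (Ca Cb D : {set E}) e : is_cycle ends Ca -> is_cycle ends Cb ->
  Ca \subset D -> Cb \subset D -> e \in Ca -> e \notin Cb -> (2 <= corank ends D)%N.
Proof.
move=> ca cb sa sb eCa eCb.
rewrite (corank_nonbridge (subsetP sa _ eCa) (cycle_nonbridge ca sa eCa)) ltnS.
apply: (cycle_corank cb); apply/subsetP => x xb; rewrite !inE (subsetP sb _ xb) andbT.
by apply/eqP => xe; move: eCb; rewrite -xe xb.
Qed.

Lemma two_cycles (C1 C2 D : {set E}) : is_cycle ends C1 -> is_cycle ends C2 ->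
  C1 \subset D -> C2 \subset D -> C1 != C2 -> (2 <= corank ends D)%N.
Proof.
move=> c1 c2 s1 s2 ne.
case: (boolP (C1 \subset C2)) => s12.
  have : ~~ (C2 \subset C1).
    by apply/negP => s21; move/negP: ne; apply; rewrite eqEsubset s12 s21.
  case/subsetPn => e e2 e1; exact: (two_cycles_aux c2 c1 s2 s1 e2 e1).
case/subsetPn: s12 => e e1 e2; exact: (two_cycles_aux c1 c2 s1 s2 e1 e2).
Qed.


Lemma deg_ge2 (B : {set E}) x : (forall e, e \in B -> ~~ is_bridge ends B e) ->
  (0 < deg B x)%N -> (2 <= deg B x)%N.
Proof.
move=> nb dpos; rewrite leqNgt; apply/negP => d1.
have d1' : deg B x = 1%N by lia.
have [e eB te] : exists2 e, e \in B & (0 < ((ends e).1 == x) + ((ends e).2 == x))%N.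
  case: (boolP [exists e in B, (0 < ((ends e).1 == x) + ((ends e).2 == x))%N])
    => [/exists_inP[e eB te]|/exists_inPn H]; first by exists e.
  move: d1'; rewrite /Defs.deg big1 // => e eB; move: (H e eB); lia.
have := deg_del x eB; rewrite d1' => dd.
have d0 : deg (B :\ e) x = 0%N by lia.
move/negP: (nb e eB); apply; apply: bridge_of_nc => //; apply/negP => c.
move: dd te; case E1: ((ends e).1 == x); case E2: ((ends e).2 == x) => //= dd te.
- lia.
- move/eqP: E1 => E1; rewrite E1 in c.
  by move: (iso_connect d0 c) => E2'; move/eqP: E2; rewrite E2'.
- move/eqP: E2 => E2; rewrite E2 (csym (B :\ e)) in c.
  by move: (iso_connect d0 c) => E1'; move/eqP: E1; rewrite E1'.
Qed.

Lemma bc (B : {set E}) : corank ends B = 1%N ->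
  (forall e, e \in B -> ~~ is_bridge ends B e) -> is_cycle ends B.
Proof.
move=> c1 nb.
set Iso := [set x | deg B x == 0%N].
set R := croots B.
set RN := R :\: Iso.
have F1 : Iso \subset R.
  apply/subsetP => x; rewrite !inE => /eqP d0.
  by apply/eqP; apply: iso_connect d0 (connect_root _ _).
have F2 : ncomp ends B = (#|Iso| + #|RN|)%N.
  by rewrite ncompE -/R -(cardsID Iso R) (setIidPr F1).
have F3 := cardsC Iso.
have F5 := handshake B.
have F6 : (\sum_x deg B x = \sum_(x in ~: Iso) deg B x)%N.
  rewrite (bigID (fun x => x \in Iso)) /= big1 ?add0n; last first.
    by move=> x; rewrite inE => /eqP.
  by apply: eq_bigl => x; rewrite [in RHS]inE.
have F4 : forall x, x \in ~: Iso -> (2 <= deg B x)%N.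
  move=> x; rewrite !inE => d; apply: deg_ge2 => //; lia.
have F7 : (\sum_(x in ~: Iso) deg B x =
            \sum_(x in ~: Iso) (deg B x - 2) + #|~: Iso| * 2)%N.
  rewrite -sum_nat_const -big_split /=; apply: eq_bigr => x /F4; lia.
have F9 : (1 <= #|RN|)%N.
  have [e eB] : exists e, e \in B.
    apply/set0Pn; rewrite -card_gt0; move: c1; rewrite /corank; lia.
  set x := (ends e).1.
  have dx : (0 < deg B x)%N by apply: deg_pos_of_adj (adj_ends eB).
  apply/card_gt0P; exists (fingraph.root (adj B) x); rewrite !inE.
  rewrite roots_root ?andbT; last exact: csym.
  apply/negP => /eqP d0.
  have := iso_connect d0 (y := x); rewrite (csym B) connect_root => /(_ isT) xr.
  by move: dx; rewrite xr d0.
have Hnc := ncomp_le B.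
have RNle : (#|RN| <= #|~: Iso|)%N.
  apply: subset_leq_card; apply/subsetP => x; rewrite !inE => /andP[].
  by [].
move: c1; rewrite /corank /rk => c1.
have RN1 : #|RN| = 1%N by lia.
have Fz : (\sum_(x in ~: Iso) (deg B x - 2) = 0)%N by lia.
have all2 : forall x, x \in ~: Iso -> deg B x = 2%N.
  move=> x xI; move/eqP: Fz; rewrite sum_nat_eq0 => /forall_inP /(_ x xI) /eqP.
  have := F4 x xI; lia.
apply/andP; split; [apply/andP; split|].
- apply/set0Pn; have [e eB] : exists e, e \in B.
    apply/set0Pn; rewrite -card_gt0; lia.
  by exists e.
- apply/forallP => x; case: (boolP (x \in Iso)); first by rewrite inE => ->.
  by move=> xI; rewrite all2 ?orbT // inE.
apply/forallP => u; apply/forallP => v; apply/implyP => /andP[du dv].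
have rin : forall w, (0 < deg B w)%N -> fingraph.root (adj B) w \in RN.
  move=> w dw; rewrite !inE roots_root ?andbT; last exact: csym.
  apply/negP => /eqP d0.
  have := iso_connect d0 (y := w); rewrite (csym B) connect_root => /(_ isT) wr.
  by move: dw; rewrite wr d0.
move/eqP: RN1 => /cards1P [z Hz].
have := rin u du; have := rin v dv; rewrite Hz !inE => /eqP rv /eqP ru.
by apply/(fingraph.rootP (csym B)); rewrite ru rv.
Qed.


Lemma perA (h : nat) (A : {set E}) :
  (forall B : {set E}, h_candidate ends B -> (h <= #|B|)%N) -> (#|A| < h)%N ->
  ((corank ends A == 0%N) +
    #|[set C : {set E} | is_cycle ends C && (#|C| < h)%N && (C \subset A)]|)%N = 1%N.
Proof.
move=> hmin hA.
set S := [set C : {set E} | _].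
case: (eqVneq (corank ends A) 0%N) => [c0|c0].
  suff -> : S = set0 by rewrite cards0.
  apply/setP => C; rewrite !inE; apply/negP => /andP[/andP[cyc _] sCA].
  by have := cycle_corank cyc sCA; rewrite c0.
have cA1 := small_corank hmin hA.
have [B sBA [cAB nbB]] := peel A.
have hB : (#|B| < h)%N by apply: leq_ltn_trans hA; apply: subset_leq_card.
have cB1 := small_corank hmin hB.
have cycB : is_cycle ends B by apply: bc => //; lia.
suff -> : S = [set B] by rewrite cards1.
apply/setP => C; rewrite !inE; apply/idP/eqP => [/andP[/andP[cyc _] sCA]|->].
  apply/eqP; apply/negPn/negP => ne.
  by have := two_cycles cyc cycB sCA sBA ne; lia.
by rewrite cycB hB sBA.
Qed.

Local Open Scope ring_scope.

Lemma GL (h : nat) (W : nat -> int) :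
  (forall B : {set E}, h_candidate ends B -> (h <= #|B|)%N) ->
  (forall j, (h <= j)%N -> W j = 0) ->
  \sum_(A : {set E}) (corank ends A == 0%N)%:R * W #|A| =
  \sum_(A : {set E}) W #|A| -
  \sum_(C : {set E} | is_cycle ends C && (#|C| < h)%N) \sum_(A : {set E} | C \subset A) W #|A|.
Proof.
move=> hmin hW.
rewrite (exchange_big_dep predT) //= -sumrB; apply: eq_bigr => A _.
rewrite sumr_const.
case: (ltnP #|A| h) => hA; last by rewrite hW // mulr0 mul0rn subrr.
have := perA hmin hA.
set S := [set C : {set E} | _].
have -> : #|[pred C : {set E} | is_cycle ends C && (#|C| < h)%N & C \subset A]| = #|S|.
  by apply: eq_card => C; rewrite !inE.
case: (corank ends A == 0%N) => /= H.
  have -> : #|S| = 0%N by move: H; rewrite add1n => -[].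
  by rewrite mul1r mulr0n subr0.
have -> : #|S| = 1%N by move: H; rewrite add0n.
by rewrite mul0r mulr1n subrr.
Qed.

End G.

Local Open Scope ring_scope.

Definition Xm1 : {poly int} := 'X - 1.

Lemma Xm1E : Xm1 = 'X - 1%:P.
Proof. by rewrite polyC1. Qed.

Lemma size_Xm1n n : size (Xm1 ^+ n) = n.+1.
Proof. by rewrite Xm1E size_exp_XsubC. Qed.

Lemma coef_Xm1n_high n i : (n < i)%N -> (Xm1 ^+ n)`_i = 0.
Proof. by move=> lt; rewrite nth_default // size_Xm1n. Qed.

Definition S (M R : nat) : {poly int} := \sum_(j < R.+1) Xm1 ^+ (R - j) *+ 'C(M, j).

Lemma S_rec M R : S M.+1 R.+1 = S M R.+1 + S M R.
Proof.
rewrite /S big_ord_recl [in X in _ = X + _]big_ord_recl /= !bin0 !subn0.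
have E1 : \sum_(i < R.+1) Xm1 ^+ (R.+1 - bump 0 i) *+ 'C(M.+1, bump 0 i) =
  \sum_(i < R.+1) Xm1 ^+ (R - i) *+ 'C(M, i.+1) + \sum_(i < R.+1) Xm1 ^+ (R - i) *+ 'C(M, i).
  rewrite -big_split /=; apply: eq_bigr => j _.
  by rewrite /bump /= add1n subSS binS mulrnDr.
have E2 : \sum_(i < R.+1) Xm1 ^+ (R.+1 - bump 0 i) *+ 'C(M, bump 0 i) =
  \sum_(i < R.+1) Xm1 ^+ (R - i) *+ 'C(M, i.+1).
  by apply: eq_bigr => j _; rewrite /bump /= add1n subSS.
by rewrite E1 E2 addrA.
Qed.

Lemma S_base R : S R.+1 R = \sum_(k < R.+1) 'X ^+ (R - k) * 1 ^+ k.
Proof.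
have nz : Xm1 != 0 by rewrite -size_poly_eq0 Xm1E size_XsubC.
apply: (mulfI nz).
have -> : Xm1 * \sum_(k < R.+1) 'X ^+ (R - k) * 1 ^+ k = 'X ^+ R.+1 - 1 ^+ R.+1.
  by rewrite subrXX.
rewrite expr1n /S mulr_sumr.
have -> : ('X : {poly int}) = Xm1 + 1 by rewrite /Xm1 subrK.
rewrite exprDn [X in _ = X - _]big_ord_recr /= subnn expr0 expr1n mulr1 binn mulr1n addrK.
apply: eq_bigr => j _; rewrite expr1n mulr1 mulrnAr -exprS subSn //.
by rewrite -ltnS.
Qed.

Lemma coef_S_high M R i : (R < i)%N -> (S M R)`_i = 0.
Proof.
move=> lt; rewrite /S coef_sum big1 // => j _.
by rewrite coefMn coef_Xm1n_high ?mul0rn //; lia.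
Qed.

Lemma coef_S_base R i : (i <= R)%N -> (S R.+1 R)`_i = 1.
Proof.
move=> le; rewrite S_base coef_sum.
have iR : (R - i < R.+1)%N by lia.
rewrite (bigD1 (Ordinal iR)) //= expr1n mulr1 coefXn.
have -> : (i == R - (R - i))%N by apply/eqP; lia.
rewrite big1 ?addr0 // => j /eqP jne; rewrite expr1n mulr1 coefXn.
case: eqP => // H; exfalso; apply: jne; apply: val_inj => /=; have := ltn_ord j; lia.
Qed.

Lemma coef_S M R i : (R < M)%N -> (i <= R)%N -> (S M R)`_i = ('C(M - i - 1, R - i))%:R.
Proof.
elim: M R i => [|M IH] R i // RM iR.
case: (eqVneq R M) => [RMe|RMn].
  subst R; rewrite coef_S_base //; have -> : (M.+1 - i - 1 = M - i)%N by lia.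
  by rewrite binn.
have RM' : (R < M)%N by lia.
case: R RM iR RMn RM' => [|R] RM iR RMn RM'.
  have -> : i = 0%N by lia.
  by rewrite /S big_ord1 subnn expr0 bin0 coefMn coefC /= bin0.
rewrite S_rec coefD IH //.
case: (ltnP R i) => Ri.
  have -> : i = R.+1 by lia.
  rewrite coef_S_high // addr0 !subnn !bin0.
  by [].
rewrite IH; last by [].
  2: lia.
have -> : (M.+1 - i - 1 = (M - i - 1).+1)%N by lia.
have -> : (R.+1 - i = (R - i).+1)%N by lia.
by rewrite binS natrD.
Qed.

Lemma sum_subsets (T : finType) (D : {set T}) (G : nat -> int) :
  \sum_(B : {set T} | B \subset D) G #|B| =
  \sum_(k < #|D|.+1) G k *+ 'C(#|D|, k).
Proof.
rewrite (partition_big (fun B : {set T} => (inord #|B| : 'I_(#|D|.+1))) predT) //=.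
apply: eq_bigr => k _.
have -> : \sum_(B : {set T} | (B \subset D) && (inord #|B| == k)) G #|B| =
          \sum_(B : {set T} | (B \subset D) && (inord #|B| == k)) G k.
  apply: eq_bigr => B /andP[sBD /eqP <-]; rewrite inordK //.
  by rewrite ltnS subset_leq_card.
rewrite sumr_const -cards_draws; congr (_ *+ _); apply: eq_card => B.
rewrite unfold_in /= !inE; case sBD: (B \subset D) => //=.
have le : (#|B| < #|D|.+1)%N by rewrite ltnS subset_leq_card.
apply/eqP/eqP => [<-|Ek]; first by rewrite inordK.
by apply: val_inj; rewrite /= inordK // Ek.
Qed.

Lemma sum_supsets (T : finType) (C : {set T}) (F : nat -> int) :
  \sum_(A : {set T} | C \subset A) F #|A| =
  \sum_(k < (#|T| - #|C|).+1) F (#|C| + k)%N *+ 'C(#|T| - #|C|, k).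
Proof.
have -> : (#|T| - #|C| = #|~: C|)%N by have := cardsC C; lia.
rewrite -(sum_subsets (~: C) (fun k => F (#|C| + k)%N)).
rewrite (reindex_onto (fun B => B :|: C) (fun A => A :\: C)) /=; last first.
  move=> A sCA; apply/setP => x; rewrite !inE; case xC: (x \in C) => /=; [by rewrite (subsetP sCA x xC) | by rewrite ?orbF ?andbT].
apply: eq_big => B.
  rewrite subsetUr /=; apply/eqP/idP => [<-|sB].
    by apply/subsetP => x; rewrite !inE => /andP[].
  apply/setP => x; rewrite !inE; case xC: (x \in C) => /=; last by rewrite orbF.
  by apply/esym/negP => xB; move: (subsetP sB x xB); rewrite inE xC.
move=> /andP[_ /eqP eB]; congr F.
rewrite cardsU addnC.
have -> : B :&: C = set0.
  apply/setP => x; rewrite -eB !inE; case: (x \in C); by rewrite ?andbF.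
by rewrite cards0 subn0.
Qed.

Unset Implicit Arguments.

Lemma binz_pos (a b : nat) (x y : int) : x = a%:Z -> y = b%:Z -> binz x y = ('C(a, b))%:R.
Proof. by move=> -> ->; rewrite natz. Qed.

Lemma binz_negy (x y : int) : y < 0 -> binz x y = 0.
Proof. by case: y => // n; case: x. Qed.

Lemma binz_negx (x y : int) : x < 0 -> binz x y = 0.
Proof. by case: x. Qed.

Lemma tutte_at1 (V E : finType) (ends : E -> V * V) :
  (tutte ends).[1] = \sum_(A : {set E})
     (corank ends A == 0%N)%:R * Xm1 ^+ (rk ends setT - rk ends A).
Proof.
rewrite /tutte horner_sum; apply: eq_bigr => A _.
rewrite hornerM hornerC horner_exp !hornerE subrr expr0n /= mulrC /corank /Xm1.
by [].
Qed.

Lemma sumW (m r c n : nat) : (r <= m)%N ->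
  \sum_(k < (m - c).+1)
     (if (c + k <= r)%N then (Xm1 ^+ (r - (c + k)))`_n else 0) *+ 'C(m - c, k)
  = if (c <= r)%N then (S (m - c) (r - c))`_n else 0.
Proof.
move=> rm; case: (leqP c r) => cr.
  rewrite /S coef_sum (big_ord_widen (m - c).+1
     (fun j => (Xm1 ^+ (r - c - j) *+ 'C(m - c, j))`_n)); last lia.
  rewrite [in RHS]big_mkcond /=; apply: eq_bigr => k _.
  rewrite coefMn; have -> : (c + k <= r)%N = (k < (r - c).+1)%N by lia.
  by case: ifP => _; [rewrite subnDA | rewrite mul0rn].
by rewrite big1 // => k _; rewrite ifF ?mul0rn //; lia.
Qed.

Lemma coef_S_all M R i : (R < M)%N ->
  (S M R)`_i = if (i <= R)%N then ('C(M - i - 1, R - i))%:R else 0.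
Proof.
move=> RM; case: leqP => iR; first exact: coef_S.
exact: coef_S_high.
Qed.

Theorem corollary3p7 (V E : finType) (ends : E -> V * V) (h : nat)
  (h_def : exists2 A : {set E}, h_candidate ends A & #|A| = h)
  (h_min : forall A : {set E}, h_candidate ends A -> (h <= #|A|)%N)
  (i : int)
  (hi : (#|V|%:Z - (ncomp ends setT)%:Z - h%:Z < i)) :
  coefz (tutte ends).[1] i =
    binz (#|E|%:Z - i - 1) (#|V|%:Z - (ncomp ends setT)%:Z - i)
    - \sum_(C : {set E} | is_cycle ends C && (#|C| < h)%N)
        binz (#|E|%:Z - #|C|%:Z - i - 1)
             (#|E|%:Z - #|V|%:Z + (ncomp ends setT)%:Z - 1).
Proof.
have ncle := ncomp_le ends setT.
set r := rk ends setT.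
have rE : #|V|%:Z - (ncomp ends setT)%:Z = r%:Z by rewrite /r /rk; lia.
have [A0 cand0 hA0] := h_def.
have c0 : corank ends A0 = 2%N by case/andP: cand0 => /eqP.
have rA0 : (rk ends A0 <= r)%N by apply: rk_mono; apply: subsetT.
have hle : (h <= r + 2)%N by move: c0; rewrite /corank -hA0; lia.
have mr : (r + 2 <= #|E|)%N.
  have := corank_mono ends (subsetT A0); rewrite c0 /corank cardsT -/r; lia.
have mE : #|E|%:Z - #|V|%:Z + (ncomp ends setT)%:Z - 1 = (#|E| - r - 1)%N%:Z.
  by rewrite /r /rk; lia.
rewrite rE mE in hi *.
have forest : forall A : {set E}, corank ends A = 0%N -> rk ends A = #|A| /\ (#|A| <= r)%N.
  move=> A cA; have := rk_le_card ends A; have := rk_mono ends (subsetT A).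
  by move: cA; rewrite /corank -/r; lia.
rewrite tutte_at1 -/r.
case: i hi => [n|n] hi.
-
  rewrite /coefz coef_sum.
  pose W := fun j => if (j <= r)%N then (Xm1 ^+ (r - j))`_n else 0.
  have -> : \sum_(A : {set E}) ((corank ends A == 0%N)%:R * Xm1 ^+ (r - rk ends A))`_n
          = \sum_(A : {set E}) (corank ends A == 0%N)%:R * W #|A|.
    apply: eq_bigr => A _; case: (eqVneq (corank ends A) 0%N) => cA.
      have [rA Ar] := forest A cA.
      by rewrite /= !mul1r /W Ar rA.
    by rewrite /= !mul0r coef0.
  rewrite (GL h_min (W := W)); last first.
    move=> j hj; rewrite /W; case: ifP => // jr.
    by apply: coef_Xm1n_high; lia.
  have supE : forall C : {set E}, \sum_(A : {set E} | C \subset A) W #|A| =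
      if (#|C| <= r)%N then (S (#|E| - #|C|) (r - #|C|))`_n else 0.
    move=> C; rewrite sum_supsets -(sumW #|E| r #|C| n) //; lia.
  have -> : \sum_(A : {set E}) W #|A| = \sum_(A : {set E} | set0 \subset A) W #|A|.
    by apply: eq_bigl => A; rewrite sub0set.
  rewrite supE cards0 subn0 leq0n coef_S_all; last lia.
  congr (_ - _).
    case: leqP => nr.
      by symmetry; apply: binz_pos; lia.
    by symmetry; apply: binz_negy; lia.
  apply: eq_bigr => C _; rewrite supE.
  case: (leqP #|C| r) => Cr; last first.
    apply/esym; case: (ltrP (#|E|%:Z - #|C|%:Z - n%:Z - 1) 0) => H; first exact: binz_negx.
    rewrite (binz_pos (#|E| - #|C| - n - 1)%N (#|E| - r - 1)%N); try lia.
    by rewrite bin_small //; lia.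
  rewrite coef_S_all; last lia.
  case: (leqP n (r - #|C|)) => nr.
    rewrite (binz_pos (#|E| - #|C| - n - 1)%N (#|E| - r - 1)%N); try lia.
    have -> : (#|E| - #|C| - n - 1 = #|E| - r - 1 + (r - #|C| - n))%N by lia.
    by rewrite -(bin_sub (n := (#|E| - r - 1 + (r - #|C| - n))%N)); [congr (_%:R); congr 'C(_, _); lia | lia].
  apply/esym; case: (ltrP (#|E|%:Z - #|C|%:Z - n%:Z - 1) 0) => H; first exact: binz_negx.
  rewrite (binz_pos (#|E| - #|C| - n - 1)%N (#|E| - r - 1)%N); try lia.
  by rewrite bin_small //; lia.
-
  rewrite /coefz.
  have n0 : n = 0%N by move: hi; rewrite NegzE; lia.
  have hE : h = (r + 2)%N by move: hi; rewrite NegzE; lia.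
  subst n.
  pose W := fun j : nat => ((j == r.+1)%N)%:R : int.
  have Ws : forall j, (h <= j)%N -> W j = 0.
    move=> j hj; rewrite /W.
    by have -> : (j == r.+1) = false by apply/negbTE/eqP; lia.
  have G := GL h_min Ws.
  have Z : \sum_(A : {set E}) (corank ends A == 0%N)%:R * W #|A| = 0.
    apply: big1 => A _; case: (eqVneq (corank ends A) 0%N) => cA; last by rewrite mul0r.
    have [_ Ar] := forest A cA.
    have -> : W #|A| = 0 by rewrite /W; have -> : (#|A| == r.+1) = false by apply/negbTE; rewrite neq_ltn ltnS Ar.
    by rewrite mulr0.
  rewrite Z in G; move/esym/eqP: G; rewrite subr_eq0 => /eqP G.
  have supE : forall C : {set E}, (#|C| <= r.+1)%N ->
      \sum_(A : {set E} | C \subset A) W #|A| = ('C(#|E| - #|C|, r.+1 - #|C|))%:R.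
    move=> C Cr; rewrite sum_supsets.
    have kk : (r.+1 - #|C| < (#|E| - #|C|).+1)%N by lia.
    rewrite (bigD1 (Ordinal kk)) //= big1 ?addr0.
      by rewrite /W subnKC // eqxx mulr1n.
    move=> k /eqP kne; rewrite /W.
    have -> : (#|C| + k == r.+1)%N = false.
      by apply/negbTE/eqP => e; apply: kne; apply: val_inj => /=; lia.
    by rewrite mul0rn.
  have E0 : \sum_(A : {set E}) W #|A| = \sum_(A : {set E} | set0 \subset A) W #|A|.
    by apply: eq_bigl => A; rewrite sub0set.
  rewrite E0 supE ?cards0 // subn0 in G.
  rewrite (binz_pos #|E| r.+1); try (rewrite NegzE; lia).
  rewrite G; apply/esym/eqP; rewrite subr_eq0; apply/eqP.
  apply: eq_bigr => C /andP[_ Ch].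
  rewrite supE; last lia.
  rewrite (binz_pos (#|E| - #|C|)%N (#|E| - r - 1)%N); try (rewrite NegzE; lia); try lia.
  have -> : (#|E| - r - 1 = (#|E| - #|C|) - (r.+1 - #|C|))%N by lia.
  by rewrite bin_sub //; lia.
Qed.
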